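(* Let $A$ take values $a_1,\ldots,a_{N_A}$ and $B$ take values $b_1,\ldots,b_{N_B}$. Let $P_K$ be a non-product joint probability distribution on $(A,B)$ obeying the Kolmogorov axioms of probability (so $P_K(a_i,b_j)\ge 0$, $\sum_{i,j}P_K(a_i,b_j)=1$), with all marginals nonzero and with conditional matrix $\mathbf{P}_K(A|B)$ (entries $P_K(a_i,b_j)/P_K(b_j)$) invertible. Then there exists a generalized two-variable probability assignment $P_I$ (as defined in the context) satisfying Axiom 5 such that $P_K(a_i,b_j)=P_I(a_i,b_j)$ for all $i$ and $j$.
   Context: Generalized two-variable probability assignment: a pair of real-valued (not necessarily nonnegative) arrays $P(a_i,b_j)$ (probability relative to the ordering in which $B$ precedes $A$) and $P(b_j,a_i)$ (relative to the ordering in which $A$ precedes $B$) with $\sum_{i,j}P(a_i,b_j)=1=\sum_{i,j}P(b_j,a_i)$ and ordering-independent marginals: $P(a_i)=\sum_j P(a_i,b_j)=\sum_j P(b_j,a_i)$, $P(b_j)=\sum_i P(a_i,b_j)=\sum_i P(b_j,a_i)$. Conditionals: $P(a_i|b_j)=P(a_i,b_j)/P(b_j)$, $P(b_j|a_i)=P(b_j,a_i)/P(a_i)$; $\mathbf{P}(A|B)$ is the $N_A\times N_B$ matrix of $P(a_i|b_j)$ and $\mathbf{P}(B|A)$ the $N_B\times N_A$ matrix of $P(b_j|a_i)$; $\vec P(A),\vec P(B)$ are the marginal vectors. Axiom 5 (inference axiom): $\mathbf{P}(A|B)$ and $\mathbf{P}(B|A)$ may be specified independently of $\vec P(B)$ and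 $\vec P(A)$, i.e. the same conditional matrices are consistent with $\vec P(A)=\mathbf{P}(A|B)\vec P(B)$ and $\vec P(B)=\mathbf{P}(B|A)\vec P(A)$ for every choice of the marginals. A distribution is a product distribution if $P(a_i,b_j)=P(a_i)P(b_j)$ for all $i,j$; otherwise non-product. *)

(* Defs.v *)
From mathcomp Require Import all_boot all_order all_algebra.
Set Implicit Arguments. Unset Strict Implicit. Unset Printing Implicit Defensive.
Import Order.TTheory GRing.Theory Num.Theory.
Local Open Scope ring_scope.

Section Defs.
Variables (R : realFieldType) (nA nB : nat).

(* A two-variable array indexed by (i,j) : 'I_nA * 'I_nB.
   Pab i j stands for P(a_i,b_j); Pba i j stands for P(b_j,a_i). *)

Definition margA (P : 'M[R]_(nA, nB)) : 'cV[R]_nA := \col_i \sum_j P i j.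
Definition margB (P : 'M[R]_(nA, nB)) : 'cV[R]_nB := \col_j \sum_i P i j.

Definition condAB (P : 'M[R]_(nA, nB)) : 'M[R]_(nA, nB) :=
  \matrix_(i, j) (P i j / margB P j 0).
Definition condBA (Q : 'M[R]_(nA, nB)) : 'M[R]_(nB, nA) :=
  \matrix_(j, i) (Q i j / margA Q i 0).

Definition gen_assignment (Pab Pba : 'M[R]_(nA, nB)) : Prop :=
  [/\ \sum_i \sum_j Pab i j = 1,
      \sum_i \sum_j Pba i j = 1,
      margA Pab = margA Pba &
      margB Pab = margB Pba].

Definition axiom5 (Pab Pba : 'M[R]_(nA, nB)) : Prop :=
  forall (pA : 'cV[R]_nA) (pB : 'cV[R]_nB),
    pA = condAB Pab *m pB <-> pB = condBA Pba *m pA.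

Definition kolmogorov (P : 'M[R]_(nA, nB)) : Prop :=
  (forall i j, 0 <= P i j) /\ \sum_i \sum_j P i j = 1.

Definition product_distr (P : 'M[R]_(nA, nB)) : Prop :=
  forall i j, P i j = margA P i 0 * margB P j 0.

End Defs.

Definition invertible (R : realFieldType) (m n : nat) (M : 'M[R]_(m, n)) : Prop :=
  exists N : 'M[R]_(n, m), M *m N = 1%:M /\ N *m M = 1%:M.

(* Main.v *)
Require Import Defs.
From mathcomp Require Import all_boot all_order all_algebra.
Import Order.TTheory GRing.Theory Num.Theory.
Local Open Scope ring_scope.

Theorem corollary1 (R : realFieldType) (nA nB : nat) (PK : 'M[R]_(nA, nB)) :
  kolmogorov PK ->
  ~ product_distr PK ->
  (forall i, margA PK i 0 != 0) ->
  (forall j, margB PK j 0 != 0) ->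
  invertible (condAB PK) ->
  exists PIab PIba : 'M[R]_(nA, nB),
    [/\ gen_assignment PIab PIba,
        axiom5 PIab PIba &
        forall i j, PK i j = PIab i j].
Proof.
move=> [_ Hsum] _ HA HB [N [CN NC]].
set C := condAB PK in CN NC *.
have colsum : forall j, \sum_i C i j = 1.
  move=> j; under eq_bigr => i _ do rewrite /C mxE.
  move: (HB j); rewrite -mulr_suml mxE => H; by rewrite divff.
have Nsum : forall i, \sum_j N j i = 1.
  move=> i.
  transitivity (\sum_j (\sum_k C k j) * N j i).
    by apply: eq_bigr => j _; rewrite colsum mul1r.
  under eq_bigr => j _ do rewrite mulr_suml.
  rewrite exchange_big /=.
  transitivity (\sum_k (C *m N) k i).
    by apply: eq_bigr => k _; rewrite mxE.
  rewrite CN (bigD1 i) //= big1 ?addr0; first by rewrite mxE eqxx.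
  by move=> k /negbTE Hk; rewrite mxE Hk.

have CmB : C *m margB PK = margA PK.
  apply/matrixP => i z; rewrite !ord1 !mxE.
  apply: eq_bigr => j _; rewrite /C !mxE.
  rewrite divfK //.
  by move: (HB j); rewrite mxE.
have NmA : N *m margA PK = margB PK by rewrite -CmB mulmxA NC mul1mx.
pose PIba : 'M[R]_(nA, nB) := \matrix_(i, j) (N j i * margA PK i 0).
have mAI : margA PIba = margA PK.
  apply/matrixP => i z; rewrite !ord1 !mxE.
  under eq_bigr => j _ do rewrite mxE.
  by rewrite -mulr_suml Nsum mul1r mxE.
have mBI : margB PIba = margB PK.
  rewrite -NmA; apply/matrixP => j z; rewrite !ord1 !mxE.
  by apply: eq_bigr => i _; rewrite mxE.
have DN : condBA PIba = N.
  apply/matrixP => j i; rewrite /condBA mxE mAI mxE -mulrA divff ?mulr1 //.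
exists PK, PIba; split => //.
- split => //.
  transitivity (\sum_i margA PIba i 0).
    by apply: eq_bigr => i _; rewrite mxE.
  rewrite mAI -Hsum; by apply: eq_bigr => i _; rewrite mxE.
- move=> pA pB; rewrite DN -/C; split => ->.
  + by rewrite mulmxA NC mul1mx.
  + by rewrite mulmxA CN mul1mx.
Qed.
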